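(* Let $E$ be a finite graph, let $R$ be a unital subring of $\mathbb C$ closed under complex conjugation that has an essentially unique partition of the unit, and let $u\in L_R(E)$ be a unitary ($uu^*=u^*u=1$). Then there exist paths $\alpha_1,\dots,\alpha_n,\beta_1,\dots,\beta_n\in E^*$ and $\lambda_1,\dots,\lambda_n\in R$ such that $u=\sum_{i=1}^n\lambda_i\alpha_i\beta_i^*$, $\sum_{i=1}^n\alpha_i\alpha_i^*=1$, $\sum_{i=1}^n\beta_i\beta_i^*=1$, and $|\lambda_i|=1$ for all $i$.
   Context: A unital subring $R\subseteq\mathbb C$ (containing $1$) closed under complex conjugation has an essentially unique partition of the unit if whenever $\lambda_1,\dots,\lambda_n\in R$ satisfy $\sum_{i=1}^n|\lambda_i|^2=1$, all but one of the $\lambda_i$ are zero. A graph $E=(E^0,E^1,r,s)$ has vertices $E^0$, edges $E^1$, and range and source maps $r,s$. A path is a word $e_1\cdots e_n$ with $r(e_i)=s(e_{i+1})$; vertices are paths of length $0$; $E^*$ is the set of finite paths. The Leavitt path algebra $L_R(E)$ is the universal $R$-algebra generated by pairwise orthogonal idempotents $\{v\}_{v\in E^0}$ and $\{e,e^*\}_{e\in E^1}$ with: $e^*f=0$ for $e\ne f$; $e^*e=r(e)$; $s(e)e=e=er(e)$; $e^*s(e)=e^*=r(e)e^*$; and $v=\sum_{e\in s^{-1}(v)}ee^*$ whenever $s^{-1}(v)$ is finite and nonempty. For $\alpha=e_1\cdots e_n$ put $\alpha^*=e_n^*\cdots e_1^*$. $L_R(E)$ carries the conjugate-linear involution $(\lambda\alpha\beta^*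 )^*=\overline\lambda\beta\alpha^*$, and for finite $E$, $1=\sum_{v\in E^0}v$. *)

(* Defs.v *)
From HB Require Import structures.
From mathcomp Require Import all_boot all_order all_algebra.
Set Implicit Arguments. Unset Strict Implicit. Unset Printing Implicit Defensive.
Import Order.TTheory GRing.Theory Num.Theory.
Local Open Scope ring_scope.

(* A finite graph E = (V, Ed, r, s) is given by two finTypes V (vertices),
   Ed (edges) and maps s r : Ed -> V (source, range). *)

(* A path is represented as a pair (v, es) : V * seq Ed.  If es = [::] it is
   the vertex (length-0 path) v; otherwise es = e1 ... en with s e1 = v and
   r e_i = s e_(i+1). *)
Definition is_gpath (V Ed : finType) (s r : Ed -> V) (p : V * seq Ed) : bool :=
  match p.2 with
  | [::] => true
  | e :: es => (s e == p.1) && path (fun e f => r e == s f) e es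
  end.

Definition pmon (V Ed : finType) (B : pzRingType) (pv : V -> B) (pe : Ed -> B)
  (p : V * seq Ed) : B :=
  if p.2 is [::] then pv p.1 else \prod_(e <- p.2) pe e.

Definition pmon_star (V Ed : finType) (B : pzRingType) (pv : V -> B) (pe' : Ed -> B)
  (p : V * seq Ed) : B :=
  if p.2 is [::] then pv p.1 else \prod_(e <- rev p.2) pe' e.

(* Leavitt E-family in a unital ring B (E finite, so we also record
   1 = sum_v v, which holds in L_R(E) for finite E). *)
Definition LeavittFamily (V Ed : finType) (s r : Ed -> V) (B : pzRingType)
  (pv : V -> B) (pe pe' : Ed -> B) : Prop :=
  (forall v, pv v * pv v = pv v) /\
  (forall v w, v != w -> pv v * pv w = 0) /\
  (forall e f, e != f -> pe' e * pe f = 0) /\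
  (forall e, pe' e * pe e = pv (r e)) /\
  (forall e, pv (s e) * pe e = pe e /\ pe e * pv (r e) = pe e) /\
  (forall e, pe' e * pv (s e) = pe' e /\ pv (r e) * pe' e = pe' e) /\
  (forall v, (exists e, s e = v) -> pv v = \sum_(e | s e == v) pe e * pe' e) /\
  \sum_(v : V) pv v = 1.

Definition is_alg_hom (R : pzRingType) (A B : algType R) (f : A -> B) : Prop :=
  (forall x y, f (x + y) = f x + f y) /\
  (forall x y, f (x * y) = f x * f y) /\
  f 1 = 1 /\
  (forall (k : R) x, f (k *: x) = k *: f x).

Definition IsLeavittPathAlgebra (R : comPzRingType) (V Ed : finType) (s r : Ed -> V)
  (A : algType R) (pv : V -> A) (pe pe' : Ed -> A) : Prop :=
  LeavittFamily s r pv pe pe' /\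
  (forall (B : algType R) (qv : V -> B) (qe qe' : Ed -> B),
      LeavittFamily s r qv qe qe' ->
      exists f : A -> B, is_alg_hom f /\ (forall v, f (pv v) = qv v) /\
        (forall e, f (pe e) = qe e /\ f (pe' e) = qe' e)) /\
  (forall (B : algType R) (f g : A -> B), is_alg_hom f -> is_alg_hom g ->
      (forall v, f (pv v) = g (pv v)) ->
      (forall e, f (pe e) = g (pe e) /\ f (pe' e) = g (pe' e)) ->
      forall x, f x = g x).

Definition IsLPAInvolution (R : comPzRingType) (V Ed : finType) (A : algType R)
  (conjR : R -> R) (pv : V -> A) (pe pe' : Ed -> A) (star : A -> A) : Prop :=
  (forall x y, star (x + y) = star x + star y) /\
  (forall x y, star (x * y) = star y * star x) /\
  (forall (k : R) x, star (k *: x) = conjR k *: star x) /\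
  (forall x, star (star x) = x) /\
  (forall v, star (pv v) = pv v) /\
  (forall e, star (pe e) = pe' e /\ star (pe' e) = pe e).

Definition EUPU (R : comPzRingType) (C : numClosedFieldType) (iota : R -> C) : Prop :=
  forall (n : nat) (l : 'I_n -> R),
    \sum_(i < n) `|iota (l i)| ^+ 2 = 1 ->
    exists i : 'I_n, forall j : 'I_n, j != i -> l j = 0.

(* Main.v *)
Require Import Defs.
From HB Require Import structures.
From mathcomp Require Import all_boot all_order all_algebra.
From mathcomp Require Import boolp zify.
Import Order.TTheory GRing.Theory Num.Theory.
Local Open Scope ring_scope.
Set Implicit Arguments. Unset Strict Implicit. Unset Printing Implicit Defensive.

Record lend (R : comNzRingType) (T : Type) (t0 : T) := LEnd {
  lapp : (T -> R) -> (T -> R);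
  lappD : forall g h t, lapp (fun t' => g t' + h t') t = lapp g t + lapp h t;
  lappZ : forall k g t, lapp (fun t' => k * g t') t = k * lapp g t }.
Arguments lend : clear implicits.
Arguments LEnd {R T t0}.
Arguments lapp {R T t0}.

Section LEndTh.
Variables (R : comNzRingType) (T : Type) (t0 : T).
Local Notation L := (lend R T t0).

Lemma lend_ext (a b : L) : (forall g t, lapp a g t = lapp b g t) -> a = b.
Proof.
case: a b => fa Da Za [fb Db Zb] /= H.
have E : fa = fb by apply: funext => g; apply: funext => t; apply: H.
subst fb; congr LEnd; exact: Prop_irrelevance.
Qed.

Lemma lapp0 (a : L) t : lapp a (fun _ => 0) t = 0.
Proof.
have E : (fun _ : T => (0:R)) = (fun t' => 0 * (fun _ => 0) t') by apply: funext => x; rewrite mul0r.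
by rewrite E lappZ mul0r.
Qed.

Definition l0 : L.
refine (LEnd (fun g t => 0) _ _).
- by move=> *; rewrite addr0.
- by move=> *; rewrite mulr0.
Defined.
Definition l1 : L.
refine (LEnd (fun g => g) _ _); by [].
Defined.
Definition ladd (a b : L) : L.
refine (LEnd (fun g t => lapp a g t + lapp b g t) _ _).
- by move=> g h t; rewrite !lappD addrACA.
- by move=> k g t; rewrite !lappZ mulrDr.
Defined.
Definition lopp (a : L) : L.
refine (LEnd (fun g t => - lapp a g t) _ _).
- by move=> g h t; rewrite !lappD opprD.
- by move=> k g t; rewrite !lappZ mulrN.
Defined.
Definition lmul (a b : L) : L.
refine (LEnd (fun g => lapp a (lapp b g)) _ _).
- move=> g h t; rewrite -lappD; congr lapp; apply: funext => x; exact: lappD.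
- move=> k g t; rewrite -lappZ; congr lapp; apply: funext => x; exact: lappZ.
Defined.
Definition lscale (k : R) (a : L) : L.
refine (LEnd (fun g t => k * lapp a g t) _ _).
- by move=> g h t; rewrite !lappD mulrDr.
- by move=> m g t; rewrite !lappZ mulrCA.
Defined.
End LEndTh.

HB.instance Definition _ (R : comNzRingType) (T : Type) (t0 : T) := gen_eqMixin (lend R T t0).
HB.instance Definition _ (R : comNzRingType) (T : Type) (t0 : T) := gen_choiceMixin (lend R T t0).

Section LEndZ.
Variables (R : comNzRingType) (T : Type) (t0 : T).
Local Notation L := (lend R T t0).
Lemma laddA : associative (@ladd R T t0).
Proof. by move=> a b c; apply: lend_ext => g t /=; rewrite addrA. Qed.
Lemma laddC : commutative (@ladd R T t0).
Proof. by move=> a b; apply: lend_ext => g t /=; rewrite addrC. Qed.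
Lemma ladd0 : left_id (@l0 R T t0) (@ladd R T t0).
Proof. by move=> a; apply: lend_ext => g t /=; rewrite add0r. Qed.
Lemma laddN : left_inverse (@l0 R T t0) (@lopp R T t0) (@ladd R T t0).
Proof. by move=> a; apply: lend_ext => g t /=; rewrite addNr. Qed.
End LEndZ.

HB.instance Definition _ (R : comNzRingType) (T : Type) (t0 : T) :=
  GRing.isZmodule.Build (lend R T t0) (@laddA R T t0) (@laddC R T t0)
    (@ladd0 R T t0) (@laddN R T t0).

Section LEndR.
Variables (R : comNzRingType) (T : Type) (t0 : T).
Local Notation L := (lend R T t0).
Lemma lmulA : associative (@lmul R T t0).
Proof. by move=> a b c; apply: lend_ext. Qed.
Lemma lmul1 : left_id (@l1 R T t0) (@lmul R T t0).
Proof. by move=> a; apply: lend_ext. Qed.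
Lemma lmulr1 : right_id (@l1 R T t0) (@lmul R T t0).
Proof. by move=> a; apply: lend_ext. Qed.
Lemma lmulDl : left_distributive (@lmul R T t0) +%R.
Proof. by move=> a b c; apply: lend_ext. Qed.
Lemma lmulDr : right_distributive (@lmul R T t0) +%R.
Proof.
move=> a b c; apply: lend_ext => g t /=; rewrite -lappD //.
Qed.
Lemma l1_neq0 : (@l1 R T t0) != 0.
Proof.
apply/eqP => /(congr1 (fun a : L => lapp a (fun _ => 1) t0)) /=.
by move/eqP; rewrite oner_eq0.
Qed.
End LEndR.

HB.instance Definition _ (R : comNzRingType) (T : Type) (t0 : T) :=
  GRing.Zmodule_isNzRing.Build (lend R T t0) (@lmulA R T t0) (@lmul1 R T t0)
    (@lmulr1 R T t0) (@lmulDl R T t0) (@lmulDr R T t0) (@l1_neq0 R T t0).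

Section LEndM.
Variables (R : comNzRingType) (T : Type) (t0 : T).
Local Notation L := (lend R T t0).
Lemma lscaleA a b (v : L) : lscale a (lscale b v) = lscale (a * b) v.
Proof. by apply: lend_ext => g t /=; rewrite mulrA. Qed.
Lemma lscale1 : left_id 1 (@lscale R T t0).
Proof. by move=> a; apply: lend_ext => g t /=; rewrite mul1r. Qed.
Lemma lscaleDr : right_distributive (@lscale R T t0) +%R.
Proof. by move=> k a b; apply: lend_ext => g t /=; rewrite mulrDr. Qed.
Lemma lscaleDl (v : L) : {morph (@lscale R T t0)^~ v : a b / a + b}.
Proof. by move=> a b; apply: lend_ext => g t /=; rewrite mulrDl. Qed.
End LEndM.

HB.instance Definition _ (R : comNzRingType) (T : Type) (t0 : T) :=
  GRing.Zmodule_isLmodule.Build R (lend R T t0) (@lscaleA R T t0) (@lscale1 R T t0)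
    (@lscaleDr R T t0) (@lscaleDl R T t0).

Section LEndA.
Variables (R : comNzRingType) (T : Type) (t0 : T).
Local Notation L := (lend R T t0).
Lemma lscaleAl (a : R) (u v : L) : a *: (u * v) = (a *: u) * v.
Proof. by apply: lend_ext. Qed.
End LEndA.
HB.instance Definition _ (R : comNzRingType) (T : Type) (t0 : T) :=
  GRing.Lmodule_isLalgebra.Build R (lend R T t0) (@lscaleAl R T t0).
Section LEndA2.
Variables (R : comNzRingType) (T : Type) (t0 : T).
Local Notation L := (lend R T t0).
Lemma lscaleAr (a : R) (u v : L) : a *: (u * v) = u * (a *: v).
Proof. apply: lend_ext => g t /=; by rewrite -lappZ. Qed.
End LEndA2.
HB.instance Definition _ (R : comNzRingType) (T : Type) (t0 : T) :=
  GRing.Lalgebra_isAlgebra.Build R (lend R T t0) (@lscaleAr R T t0).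

Check fun (R : comNzRingType) T (t0 : T) => (lend R T t0 : algType R).

Definition submodP (R : comNzRingType) (A : algType R) (S : A -> Prop) :=
  [/\ S 0, (forall x y, S x -> S y -> S (x + y)) & (forall k x, S x -> S (k *: x))].

Record lms (R : comNzRingType) (A : algType R) (S : A -> Prop) (hS : submodP S) := LMS {
  lmv : A; lmP : forall x, S x -> S (lmv * x) }.
Arguments lms : clear implicits.
Arguments LMS {R A S hS}.
Arguments lmv {R A S hS}.

Section LMS.
Variables (R : comNzRingType) (A : algType R) (S : A -> Prop) (hS : submodP S).
Local Notation L := (lms R A S hS).
Lemma lms_ext (a b : L) : lmv a = lmv b -> a = b.
Proof.
case: a b => fa Pa [fb Pb] /= E; subst fb; congr LMS; exact: Prop_irrelevance.
Qed.
Definition m0 : L. refine (LMS 0 _); have [h0 _ _] := hS; move=> x _; by rewrite mul0r. Defined.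
Definition m1 : L. refine (LMS 1 _); move=> x; by rewrite mul1r. Defined.
Definition madd (a b : L) : L.
refine (LMS (lmv a + lmv b) _); have [_ hD _] := hS; move=> x Sx; rewrite mulrDl; apply: hD; exact: lmP.
Defined.
Definition mopp (a : L) : L.
refine (LMS (- lmv a) _); have [_ _ hZ] := hS; move=> x Sx; rewrite mulNr -scaleN1r; apply: hZ; exact: lmP.
Defined.
Definition mmul (a b : L) : L.
refine (LMS (lmv a * lmv b) _); move=> x Sx; rewrite -mulrA; do 2 apply: lmP => //.
Defined.
Definition mscale (k : R) (a : L) : L.
refine (LMS (k *: lmv a) _); have [_ _ hZ] := hS; move=> x Sx; rewrite -scalerAl; apply: hZ; exact: lmP.
Defined.
End LMS.

HB.instance Definition _ (R : comNzRingType) (A : algType R) S hS := gen_eqMixin (lms R A S hS).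
HB.instance Definition _ (R : comNzRingType) (A : algType R) S hS := gen_choiceMixin (lms R A S hS).

Section LMSZ.
Variables (R : comNzRingType) (A : algType R) (S : A -> Prop) (hS : submodP S).
Lemma maddA : associative (@madd R A S hS).
Proof. by move=> a b c; apply: lms_ext; rewrite /= addrA. Qed.
Lemma maddC : commutative (@madd R A S hS).
Proof. by move=> a b; apply: lms_ext; rewrite /= addrC. Qed.
Lemma madd0 : left_id (@m0 R A S hS) (@madd R A S hS).
Proof. by move=> a; apply: lms_ext; rewrite /= add0r. Qed.
Lemma maddN : left_inverse (@m0 R A S hS) (@mopp R A S hS) (@madd R A S hS).
Proof. by move=> a; apply: lms_ext; rewrite /= addNr. Qed.
End LMSZ.
HB.instance Definition _ (R : comNzRingType) (A : algType R) S hS :=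
  GRing.isZmodule.Build (lms R A S hS) (@maddA R A S hS) (@maddC R A S hS)
    (@madd0 R A S hS) (@maddN R A S hS).
Section LMSR.
Variables (R : comNzRingType) (A : algType R) (S : A -> Prop) (hS : submodP S).
Lemma mmulA : associative (@mmul R A S hS).
Proof. by move=> a b c; apply: lms_ext; rewrite /= mulrA. Qed.
Lemma mmul1 : left_id (@m1 R A S hS) (@mmul R A S hS).
Proof. by move=> a; apply: lms_ext; rewrite /= mul1r. Qed.
Lemma mmulr1 : right_id (@m1 R A S hS) (@mmul R A S hS).
Proof. by move=> a; apply: lms_ext; rewrite /= mulr1. Qed.
Lemma mmulDl : left_distributive (@mmul R A S hS) +%R.
Proof. by move=> a b c; apply: lms_ext; rewrite /= mulrDl. Qed.
Lemma mmulDr : right_distributive (@mmul R A S hS) +%R.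
Proof. by move=> a b c; apply: lms_ext; rewrite /= mulrDr. Qed.
Lemma m1_neq0 : (@m1 R A S hS) != 0.
Proof. apply/eqP => /(congr1 lmv) /= /eqP; by rewrite oner_eq0. Qed.
End LMSR.
HB.instance Definition _ (R : comNzRingType) (A : algType R) S hS :=
  GRing.Zmodule_isNzRing.Build (lms R A S hS) (@mmulA R A S hS) (@mmul1 R A S hS)
    (@mmulr1 R A S hS) (@mmulDl R A S hS) (@mmulDr R A S hS) (@m1_neq0 R A S hS).
Section LMSM.
Variables (R : comNzRingType) (A : algType R) (S : A -> Prop) (hS : submodP S).
Lemma mscaleA a b (v : lms R A S hS) : mscale a (mscale b v) = mscale (a * b) v.
Proof. by apply: lms_ext; rewrite /= scalerA. Qed.
Lemma mscale1 : left_id 1 (@mscale R A S hS).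
Proof. by move=> a; apply: lms_ext; rewrite /= scale1r. Qed.
Lemma mscaleDr : right_distributive (@mscale R A S hS) +%R.
Proof. by move=> k a b; apply: lms_ext; rewrite /= scalerDr. Qed.
Lemma mscaleDl (v : lms R A S hS) : {morph (@mscale R A S hS)^~ v : a b / a + b}.
Proof. by move=> a b; apply: lms_ext; rewrite /= scalerDl. Qed.
End LMSM.
HB.instance Definition _ (R : comNzRingType) (A : algType R) S hS :=
  GRing.Zmodule_isLmodule.Build R (lms R A S hS) (@mscaleA R A S hS) (@mscale1 R A S hS)
    (@mscaleDr R A S hS) (@mscaleDl R A S hS).
Section LMSA.
Variables (R : comNzRingType) (A : algType R) (S : A -> Prop) (hS : submodP S).
Lemma mscaleAl (a : R) (u v : lms R A S hS) : a *: (u * v) = (a *: u) * v.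
Proof. by apply: lms_ext; rewrite /= scalerAl. Qed.
End LMSA.
HB.instance Definition _ (R : comNzRingType) (A : algType R) S hS :=
  GRing.Lmodule_isLalgebra.Build R (lms R A S hS) (@mscaleAl R A S hS).
Section LMSA2.
Variables (R : comNzRingType) (A : algType R) (S : A -> Prop) (hS : submodP S).
Lemma mscaleAr (a : R) (u v : lms R A S hS) : a *: (u * v) = u * (a *: v).
Proof. by apply: lms_ext; rewrite /= scalerAr. Qed.
End LMSA2.
HB.instance Definition _ (R : comNzRingType) (A : algType R) S hS :=
  GRing.Lalgebra_isAlgebra.Build R (lms R A S hS) (@mscaleAr R A S hS).

Lemma lms_val_hom (R : comNzRingType) (A : algType R) (S : A -> Prop) (hS : submodP S) :
  is_alg_hom (fun a : lms R A S hS => lmv a).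
Proof. by split=> //; split. Qed.

Section Paths.
Variables (V Ed : finType) (s r : Ed -> V).
Definition pend (p : V * seq Ed) : V := last p.1 (map r p.2).
Local Notation gp := (is_gpath s r).

Lemma gp_cons v e es : gp (v, e :: es) = (s e == v) && gp (r e, es).
Proof. rewrite /is_gpath /=; case: es => [|f fs] /=; first by rewrite andbT. by rewrite (eq_sym (s f)). Qed.

Lemma gp_nil v : gp (v, [::]).
Proof. by []. Qed.

Lemma gp_rcons p e : gp p -> s e = pend p -> gp (p.1, rcons p.2 e).
Proof.
case: p => v [|f fs]; rewrite /is_gpath /=; first by move=> _ ->; rewrite eqxx.
move=> /andP[-> Hp] He /=; rewrite rcons_path Hp /=.
by rewrite He /pend /= (last_map r) eqxx.
Qed.

Lemma pend_rcons p e : pend (p.1, rcons p.2 e) = r e.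
Proof. by rewrite /pend /= map_rcons last_rcons. Qed.

Lemma gp_cat a b : gp a -> gp b -> pend a = b.1 -> gp (a.1, a.2 ++ b.2).
Proof.
case: a => v es; case: b => w fs /= Ha Hb Hab.
elim: es v Ha Hab => [|e es IH] v Ha Hab /=; first by rewrite /pend /= in Hab; subst.
rewrite gp_cons in Ha; case/andP: Ha => /eqP <- Ha.
rewrite gp_cons eqxx /=; exact: IH.
Qed.

Lemma pend_cat a b : pend a = b.1 -> pend (a.1, a.2 ++ b.2) = pend b.
Proof.
case: a => v es; case: b => w fs /=; rewrite /pend /= map_cat last_cat => -> //.
Qed.

Variables (B : pzRingType) (pv : V -> B) (pe pe' : Ed -> B).
Hypothesis hL : LeavittFamily s r pv pe pe'.

Let vv : forall v, pv v * pv v = pv v. Proof. by case: hL. Qed.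
Let vw : forall v w, v != w -> pv v * pv w = 0. Proof. by case: hL => _ []. Qed.
Let ef : forall e f, e != f -> pe' e * pe f = 0. Proof. by case: hL => _ [] _ []. Qed.
Let ee : forall e, pe' e * pe e = pv (r e). Proof. by case: hL => _ [] _ [] _ []. Qed.
Let se : forall e, pv (s e) * pe e = pe e. Proof. by case: hL => _ [] _ [] _ [] _ [] H _ e; case: (H e). Qed.
Let er : forall e, pe e * pv (r e) = pe e. Proof. by case: hL => _ [] _ [] _ [] _ [] H _ e; case: (H e). Qed.
Let es' : forall e, pe' e * pv (s e) = pe' e. Proof. by case: hL => _ [] _ [] _ [] _ [] _ [] H _ e; case: (H e). Qed.
Let re' : forall e, pv (r e) * pe' e = pe' e. Proof. by case: hL => _ [] _ [] _ [] _ [] _ [] H _ e; case: (H e). Qed.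

Lemma LF_vv v : pv v * pv v = pv v. Proof. exact: vv. Qed.
Lemma LF_vw v w : v != w -> pv v * pv w = 0. Proof. exact: vw. Qed.
Lemma LF_ef e f : e != f -> pe' e * pe f = 0. Proof. exact: ef. Qed.
Lemma LF_ee e : pe' e * pe e = pv (r e). Proof. exact: ee. Qed.
Lemma LF_se e : pv (s e) * pe e = pe e. Proof. exact: se. Qed.
Lemma LF_er e : pe e * pv (r e) = pe e. Proof. exact: er. Qed.
Lemma LF_es' e : pe' e * pv (s e) = pe' e. Proof. exact: es'. Qed.
Lemma LF_re' e : pv (r e) * pe' e = pe' e. Proof. exact: re'. Qed.

Lemma pmon_cons v e es : gp (v, e :: es) -> pmon pv pe (v, e :: es) = pe e * pmon pv pe (r e, es).
Proof.
rewrite /pmon /= big_cons; case: es => [|f fs] _ /=; first by rewrite big_nil mulr1 er.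
by rewrite big_cons.
Qed.

Lemma pstar_cons v e es : gp (v, e :: es) ->
  pmon_star pv pe' (v, e :: es) = pmon_star pv pe' (r e, es) * pe' e.
Proof.
rewrite /pmon_star /= rev_cons big_rcons; case: es => [|f fs] _ /=; first by rewrite big_nil mul1r re'.
by rewrite rev_cons big_rcons.
Qed.

Lemma pmon_l p : gp p -> pv p.1 * pmon pv pe p = pmon pv pe p.
Proof.
case: p => v [|e es] /=; first by rewrite /pmon /= vv.
move=> H; rewrite pmon_cons // mulrA; move: H; rewrite gp_cons => /andP[/eqP <- _].
by rewrite se.
Qed.

Lemma pmon_r p : gp p -> pmon pv pe p * pv (pend p) = pmon pv pe p.
Proof.
case: p => v es; elim: es v => [|e es IH] v /=; first by rewrite /pmon /pend /= vv.
move=> H; rewrite pmon_cons // -mulrA; move: H; rewrite gp_cons => /andP[_ H].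
by rewrite -[pend _]/(pend (r e, es)) IH.
Qed.

Lemma pstar_r p : gp p -> pmon_star pv pe' p * pv p.1 = pmon_star pv pe' p.
Proof.
case: p => v [|e es] /=; first by rewrite /pmon_star /= vv.
move=> H; rewrite pstar_cons // -mulrA; move: H; rewrite gp_cons => /andP[/eqP <- _].
by rewrite es'.
Qed.

Lemma pstar_l p : gp p -> pv (pend p) * pmon_star pv pe' p = pmon_star pv pe' p.
Proof.
case: p => v es; elim: es v => [|e es IH] v /=; first by rewrite /pmon_star /pend /= vv.
move=> H; rewrite pstar_cons // mulrA; move: H; rewrite gp_cons => /andP[_ H].
by rewrite -[pend _]/(pend (r e, es)) IH.
Qed.

Lemma pmon_rcons p e : gp p -> s e = pend p ->
  pmon pv pe (p.1, rcons p.2 e) = pmon pv pe p * pe e.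
Proof.
case: p => v [|f fs] /= H He; rewrite /pmon /=.
  by rewrite /pend /= in He; rewrite big_cons big_nil mulr1 -He se.
by rewrite -rcons_cons big_rcons.
Qed.

Lemma pstar_rcons p e : gp p -> s e = pend p ->
  pmon_star pv pe' (p.1, rcons p.2 e) = pe' e * pmon_star pv pe' p.
Proof.
case: p => v [|f fs] /= H He; rewrite /pmon_star /=.
  by rewrite /pend /= in He; rewrite big_cons big_nil mulr1 -He es'.
by rewrite -rcons_cons rev_rcons big_cons.
Qed.

Lemma pstar_mon p : gp p -> pmon_star pv pe' p * pmon pv pe p = pv (pend p).
Proof.
case: p => v es; elim: es v => [|e es IH] v /=; first by rewrite /pmon_star /pmon /pend /= vv.
move=> H; rewrite pstar_cons // pmon_cons //; move: H; rewrite gp_cons => /andP[_ H].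
rewrite mulrA -(mulrA _ (pe' e)) ee -[r e]/((r e, es).1) pstar_r //.
by rewrite -[pend _]/(pend (r e, es)) -IH.
Qed.

Lemma pv_pe_0 v e : v != s e -> pv v * pe e = 0.
Proof. by move=> H; rewrite -se mulrA vw // mul0r. Qed.
Lemma pe_pv_0 v e : v != r e -> pe e * pv v = 0.
Proof. by move=> H; rewrite -er -mulrA vw 1?eq_sym // mulr0. Qed.
Lemma pe'_pv_0 v e : v != s e -> pe' e * pv v = 0.
Proof. by move=> H; rewrite -es' -mulrA vw 1?eq_sym // mulr0. Qed.
Lemma pv_pe'_0 v e : v != r e -> pv v * pe' e = 0.
Proof. by move=> H; rewrite -re' mulrA vw // mul0r. Qed.

Definition sinkv (v : V) := forall e, s e <> v.

Lemma claim b g : gp b -> gp g -> ((size b.2 <= size g.2)%N \/ sinkv (pend g)) ->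
  pmon_star pv pe' b * pmon pv pe g = 0 \/
  exists rho, [/\ gp rho, pend rho = pend g & pmon_star pv pe' b * pmon pv pe g = pmon pv pe rho].
Proof.
case: b => v es; elim: es v g => [|f fs IH] v [w gs] Hb Hg Hc.
  rewrite /pmon_star /=; have [E|ne] := eqVneq v w.
    by subst w; right; exists (v, gs); split=> //; rewrite (pmon_l Hg).
  by left; rewrite -[pmon _ _ _]pmon_l // mulrA vw // mul0r.
rewrite pstar_cons //; move: Hb; rewrite gp_cons => /andP[/eqP sf Hb].
case: gs Hg Hc => [|g gs] Hg Hc.
  left; rewrite /pmon /= -mulrA.
  have ne : w != s f.
    apply/eqP => E; case: Hc => //= Hs; exact: (Hs f (esym E)).
  by rewrite pe'_pv_0 // mulr0.
have [E|ne] := eqVneq f g; last by left; rewrite (pmon_cons Hg) mulrA -(mulrA _ (pe' f)) ef // mulr0 mul0r.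
subst g; rewrite (pmon_cons Hg) mulrA -(mulrA _ (pe' f)) ee -[r f]/((r f, fs).1) pstar_r //.
move: Hg; rewrite gp_cons => /andP[_ Hg].
apply: IH => //.
Qed.

Lemma concat a b : gp a -> gp b ->
  pmon pv pe a * pmon pv pe b = 0 \/
  exists rho, [/\ gp rho, pend rho = pend b & pmon pv pe a * pmon pv pe b = pmon pv pe rho].
Proof.
move=> Ha Hb; have [E|ne] := eqVneq (pend a) b.1; last first.
  by left; rewrite -(pmon_r Ha) -(pmon_l Hb) mulrA -(mulrA (pmon pv pe a)) vw // mulr0 mul0r.
right; exists (a.1, a.2 ++ b.2); split; [exact: gp_cat | exact: pend_cat|].
case: a Ha E => v es; case: b Hb => w fs Hb Ha E /=.
case: es Ha E => [|e es] Ha E.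
  by rewrite /pend /= in E; subst w; exact: (pmon_l Hb).
case: fs Hb E => [|f fs] Hb E.
  by rewrite cats0 /= in E *; subst w; exact: (pmon_r Ha).
by rewrite /pmon /= -cat_cons big_cat.
Qed.

End Paths.

Section Rep.
Variables (V Ed : finType) (s r : Ed -> V) (R : comNzRingType).
Local Notation gp := (is_gpath s r).

Definition Raw := (V * (nat -> option Ed))%type.
Fixpoint pos (x : Raw) (k : nat) : V :=
  match k with 0 => x.1 | k'.+1 => match x.2 k' with Some e => r e | None => pos x k' end end.
Definition valid (x : Raw) := forall k,
  match x.2 k with Some e => s e = pos x k | None => forall e, s e <> pos x k end.
Definition X := {x : Raw | valid x}.
Definition rtail (x : Raw) : Raw := (pos x 1, fun k => x.2 k.+1).
Definition rcns (e : Ed) (x : Raw) : Raw := (s e, fun k => if k is k'.+1 then x.2 k' else Some e).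

Lemma pos_tail x k : pos (rtail x) k = pos x k.+1.
Proof. by elim: k => [|k IH] //=; rewrite IH. Qed.

Lemma valid_tail x : valid x -> valid (rtail x).
Proof. by move=> H k; rewrite pos_tail; exact: (H k.+1). Qed.

Lemma pos_cons e x k : r e = x.1 -> pos (rcns e x) k.+1 = pos x k.
Proof.
move=> E; elim: k => [|k IH]; first by rewrite /= E.
change (match x.2 k with Some e' => r e' | None => pos (rcns e x) k.+1 end = pos x k.+1).
by rewrite IH.
Qed.

Lemma valid_cons e x : r e = x.1 -> valid x -> valid (rcns e x).
Proof.
move=> E H [|k]; first by [].
change (match x.2 k with Some e' => s e' = pos (rcns e x) k.+1
   | None => forall e', s e' <> pos (rcns e x) k.+1 end).
rewrite pos_cons //; exact: H.
Qed.

Lemma X_ext (a b : X) : sval a = sval b -> a = b.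
Proof. case: a b => a Ha [b Hb] /= E; subst b; congr exist; exact: Prop_irrelevance. Qed.

Definition xtail (x : X) : X := exist _ (rtail (sval x)) (valid_tail (proj2_sig x)).
Definition xcons (e : Ed) (x : X) : X :=
  match @eqP _ (r e) (sval x).1 with
  | ReflectT h => exist _ (rcns e (sval x)) (valid_cons h (proj2_sig x))
  | ReflectF _ => x end.

Lemma xcons_val e x : r e = (sval x).1 -> sval (xcons e x) = rcns e (sval x).
Proof. by rewrite /xcons; case: eqP. Qed.

Lemma xtail_cons e x : r e = (sval x).1 -> xtail (xcons e x) = x.
Proof.
move=> E; apply: X_ext; rewrite /= xcons_val //; case: x E => [[v f] H] /= E.
by rewrite /rtail /= E.
Qed.

Definition xconsL (es : seq Ed) (x : X) : X := foldr xcons x es.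

Definition TT := (X * int)%type.

Definition Ovf (v : V) (g : TT -> R) (t : TT) : R := if (sval t.1).1 == v then g t else 0.
Definition Oef (e : Ed) (g : TT -> R) (t : TT) : R :=
  if (sval t.1).2 0 == Some e then g (xtail t.1, t.2 - 1) else 0.
Definition Oe'f (e : Ed) (g : TT -> R) (t : TT) : R :=
  if r e == (sval t.1).1 then g (xcons e t.1, t.2 + 1) else 0.

Variable t0 : TT.
Local Notation L := (lend R TT t0).

Definition Ov (v : V) : L.
refine (LEnd (Ovf v) _ _); rewrite /Ovf => *; case: ifP; rewrite ?addr0 ?mulr0 //.
Defined.
Definition Oe (e : Ed) : L.
refine (LEnd (Oef e) _ _); rewrite /Oef => *; case: ifP; rewrite ?addr0 ?mulr0 //.
Defined.
Definition Oe' (e : Ed) : L.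
refine (LEnd (Oe'f e) _ _); rewrite /Oe'f => *; case: ifP; rewrite ?addr0 ?mulr0 //.
Defined.

Lemma lappM (a b : L) g t : lapp (a * b) g t = lapp a (lapp b g) t.
Proof. by []. Qed.
Lemma lapp1 g t : lapp (1 : L) g t = g t.
Proof. by []. Qed.
Lemma lappDD (a b : L) g t : lapp (a + b) g t = lapp a g t + lapp b g t.
Proof. by []. Qed.
Lemma lappS (I : Type) (rr : seq I) (P : pred I) (F : I -> L) g t :
  lapp (\sum_(i <- rr | P i) F i) g t = \sum_(i <- rr | P i) lapp (F i) g t.
Proof. by elim/big_rec2: _ => // i y1 y2 _ <-. Qed.

Lemma Rep_LF : LeavittFamily s r Ov Oe Oe'.
Proof.
split; [|split; [|split; [|split; [|split; [|split; [|split]]]]]].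
- move=> v; apply: lend_ext => g t; rewrite lappM /= /Ovf; by case: ifP => H; rewrite ?H.
- move=> v w ne; apply: lend_ext => g t; rewrite lappM /= /Ovf.
  case: ifP => // /eqP E; case: ifP => // /eqP E'; by rewrite -E -E' eqxx in ne.
- move=> e f ne; apply: lend_ext => g t; rewrite lappM /= /Oe'f /Oef.
  case: ifP => // /eqP E; rewrite xcons_val //=; case: eqP => // -[] E'.
  by rewrite E' eqxx in ne.
- move=> e; apply: lend_ext => g t; rewrite lappM /= /Oe'f /Oef /Ovf.
  rewrite eq_sym; case: ifP => // /eqP E; rewrite xcons_val //= eqxx xtail_cons //.
  by rewrite addrK; case: t E.
- move=> e; split; apply: lend_ext => g t; rewrite lappM /= /Oe'f /Oef /Ovf.
    case: ifP => //; case: ifP => // /eqP F0 NE.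
    case: t => [[[v f] H] n] /= in F0 NE *.
    by have := H 0; rewrite /= F0 => E; rewrite E eqxx in NE.
  case: ifP => // /eqP E /=; rewrite /rtail /=; by rewrite E eqxx.
- move=> e; split; apply: lend_ext => g t; rewrite lappM /= /Oe'f /Oef /Ovf.
    by case: ifP => // /eqP E; rewrite xcons_val //= eqxx.
  by rewrite eq_sym; case: ifP => H; rewrite ?H.
- move=> v [e0 He0]; apply: lend_ext => g t; rewrite lappS /= /Ovf.
  case: t => [[[w f] H] n] /=.
  have H0 := H 0; simpl in H0.
  case: eqP => [Ew|new].
    subst w; case E0: (f 0) H0 => [e1|] H0; last by case: (H0 e0).
    rewrite (bigD1 e1) /=; last by rewrite H0.
    rewrite /Oef /= E0 eqxx big1 ?addr0; last first.
      by move=> e /andP[_ ne]; case: eqP => // -[] E; rewrite E eqxx in ne.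
    rewrite /Oe'f /= /rtail /= E0 eqxx subrK; congr g; congr pair; apply: X_ext.
    rewrite xcons_val /= /rtail /= ?E0 //.
    rewrite /rcns /= H0; congr pair; apply: funext => -[|k] //=.
  rewrite big1 // => e /eqP se; rewrite /Oe'f /Oef /=; case: eqP => // E.
  by rewrite E /= in H0; case: new; rewrite -se.
- apply: lend_ext => g t; rewrite lappS /= /Ovf.
  rewrite (bigD1 (sval t.1).1) //= eqxx big1 ?addr0 // => v ne.
  by rewrite eq_sym (negbTE ne).
Qed.

Local Notation hL := Rep_LF.

Lemma xconsL_start v es x : gp (v, es) -> pend r (v, es) = (sval x).1 ->
  (sval (xconsL es x)).1 = v.
Proof.
elim: es v => [|e es IH] v /=; first by rewrite /pend /= => _ ->.
rewrite gp_cons => /andP[/eqP <- H] E.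
by rewrite xcons_val // (IH _ H E).
Qed.

Lemma star_sem p G x n : gp p ->
  lapp (pmon_star Ov Oe' p) G (x, n) =
  if pend r p == (sval x).1 then G (xconsL p.2 x, n + (size p.2)%:Z) else 0.
Proof.
case: p => v es; elim: es v G n => [|e es IH] v G n H.
  by rewrite /= /Ovf /pend /= addr0 eq_sym.
rewrite (pstar_cons hL H) lappM; move: H; rewrite gp_cons => /andP[/eqP se H].
rewrite (IH _ _ _ H) -[pend r (v, e :: es)]/(pend r (r e, es)).
case: eqP => // E; rewrite /= /Oe'f /= (xconsL_start H E) eqxx.
by congr (G (_, _)); rewrite /=; lia.
Qed.

Lemma mon_weak p g x n : gp p ->
  lapp (pmon Ov Oe p) g (x, n) = 0 \/
  exists y, lapp (pmon Ov Oe p) g (x, n) = g (y, n - (size p.2)%:Z).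
Proof.
case: p => v es; elim: es v x n => [|e es IH] v x n H.
  rewrite /= /Ovf /=; case: ifP => _; [right; exists x | left] => //.
  by rewrite subr0.
rewrite (pmon_cons hL H) lappM; move: H; rewrite gp_cons => /andP[_ H].
rewrite /= /Oef /=; case: ifP => _; last by left.
have [->|[y ->]] := IH _ (xtail x) (n - 1) H; [by left | right; exists y].
by congr (g (y, _)); rewrite /=; lia.
Qed.

Lemma mon_sem p q g x n : gp p -> gp q -> pend r q = (sval x).1 ->
  size p.2 = size q.2 ->
  lapp (pmon Ov Oe p) g (xconsL q.2 x, n) =
  if p == q then g (x, n - (size q.2)%:Z) else 0.
Proof.
case: p => v es; case: q => w fs.
elim: fs v w es n => [|f fs IH] v w [|e es] n //= Hp Hq E Sz.
  rewrite /Ovf /= -E /pend /= subr0 xpair_eqE eqxx andbT eq_sym //.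
have Hq' := Hq; rewrite gp_cons in Hq'; case/andP: Hq' => /eqP sf Hq'.
have Hp' := Hp; rewrite gp_cons in Hp'; case/andP: Hp' => /eqP se Hp'.
rewrite (pmon_cons hL Hp) lappM /= /Oef /=.
have St := xconsL_start Hq' E.
rewrite xcons_val //= xtail_cons //.
have [EE|ne] := eqVneq f e; last first.
  rewrite /rcns /=; case: eqP => [[] x1|_]; first by rewrite x1 eqxx in ne.
  by case: eqP => // E2; case: E2 => _ x1 _; rewrite x1 eqxx in ne.
subst e; rewrite /rcns /= eqxx.
rewrite (IH (r f) (r f) es (n - 1) Hp' Hq' E) ?[size _]/=; last by case: Sz.
rewrite !xpair_eqE /= eqxx /= -se -sf eqxx /=.
rewrite eqseq_cons eqxx /=; case: eqP => // _; congr (g (_, _)); lia.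
Qed.

End Rep.

Section Hom.
Variables (R : comNzRingType) (A B : algType R) (f : A -> B) (hf : is_alg_hom f).
Lemma homD x y : f (x + y) = f x + f y. Proof. by case: hf. Qed.
Lemma homM x y : f (x * y) = f x * f y. Proof. by case: hf => _ []. Qed.
Lemma hom1 : f 1 = 1. Proof. by case: hf => _ [] _ []. Qed.
Lemma homZ k x : f (k *: x) = k *: f x. Proof. by case: hf => _ [] _ []. Qed.
Lemma hom0 : f 0 = 0. Proof. by rewrite -(scale0r 0) homZ scale0r. Qed.
Lemma homS (I : Type) (rr : seq I) (P : pred I) (F : I -> A) :
  f (\sum_(i <- rr | P i) F i) = \sum_(i <- rr | P i) f (F i).
Proof. elim/big_rec2: _ => [|i y1 y2 _ <-]; [exact: hom0 | exact: homD]. Qed.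
Lemma homP (I : Type) (rr : seq I) (F : I -> A) :
  f (\prod_(i <- rr) F i) = \prod_(i <- rr) f (F i).
Proof. elim: rr => [|i rr IH]; rewrite ?big_nil ?hom1 // !big_cons homM IH //. Qed.
Variables (V Ed : finType) (pv : V -> A) (pe : Ed -> A).
Lemma hom_pmon p : f (pmon pv pe p) = pmon (fun v => f (pv v)) (fun e => f (pe e)) p.
Proof. by rewrite /pmon; case: p.2 => [|e es] //; rewrite homP. Qed.
Lemma hom_pstar p : f (pmon_star pv pe p) = pmon_star (fun v => f (pv v)) (fun e => f (pe e)) p.
Proof. by rewrite /pmon_star; case: p.2 => [|e es] //; rewrite homP. Qed.
End Hom.

Section Star.
Variables (R : comNzRingType) (V Ed : finType) (A : algType R) (conjR : R -> R)
  (pv : V -> A) (pe pe' : Ed -> A) (star : A -> A)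
  (hstar : IsLPAInvolution conjR pv pe pe' star).
Lemma starD x y : star (x + y) = star x + star y. Proof. by case: hstar. Qed.
Lemma starM x y : star (x * y) = star y * star x. Proof. by case: hstar => _ []. Qed.
Lemma starZ k x : star (k *: x) = conjR k *: star x. Proof. by case: hstar => _ [] _ []. Qed.
Lemma starK x : star (star x) = x. Proof. by case: hstar => _ [] _ [] _ []. Qed.
Lemma star_v v : star (pv v) = pv v. Proof. by case: hstar => _ [] _ [] _ [] _ []. Qed.
Lemma star_e e : star (pe e) = pe' e. Proof. by case: hstar => _ [] _ [] _ [] _ [] _ H; case: (H e). Qed.
Lemma star0 : star 0 = 0.
Proof. by apply: (addrI (star 0)); rewrite -starD !addr0. Qed.
Lemma star1 : star 1 = 1.
Proof. have := starM 1 (star 1); rewrite mul1r starK mul1r => E; exact: esym E. Qed.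
Lemma starS (I : Type) (rr : seq I) (P : pred I) (F : I -> A) :
  star (\sum_(i <- rr | P i) F i) = \sum_(i <- rr | P i) star (F i).
Proof. elim/big_rec2: _ => [|i y1 y2 _ <-]; [exact: star0 | exact: starD]. Qed.
Lemma star_pmon p : star (pmon pv pe p) = pmon_star pv pe' p.
Proof.
rewrite /pmon /pmon_star; case: p => v [|e es] /=; first exact: star_v.
elim: (e :: es) => [|f fs IH]; first by rewrite !big_nil star1.
by rewrite big_cons starM IH rev_cons big_rcons star_e.
Qed.
End Star.

Section Canon.
Variables (V Ed : finType) (s r : Ed -> V).
Definition ch (v : V) : option Ed := [pick e | s e == v].
Fixpoint walk (w : V) (k : nat) : V :=
  match k with 0 => w | k'.+1 => match ch (walk w k') with Some e => r e | None => walk w k' end end.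
Definition craw (w : V) : Raw V Ed := (w, fun k => ch (walk w k)).
Lemma pos_craw w k : pos r (craw w) k = walk w k.
Proof. by elim: k => [|k IH] //=; rewrite IH. Qed.
Lemma valid_craw w : valid s r (craw w).
Proof.
move=> k; rewrite pos_craw /=; rewrite /ch; case: pickP => [e /eqP //|H e E].
by have := H e; rewrite E eqxx.
Qed.
Definition canon (w : V) : X s r := exist _ (craw w) (valid_craw w).
End Canon.

Section Phi.
Variables (R : comNzRingType) (V Ed : finType) (s r : Ed -> V)
  (A : algType R) (pv : V -> A) (pe pe' : Ed -> A)
  (hA : IsLeavittPathAlgebra s r pv pe pe').
Local Notation gp := (is_gpath s r).

Lemma phi_exists (w : V) : exists phi : A -> R,
  [/\ forall x y, phi (x + y) = phi x + phi y,
      forall k x, phi (k *: x) = k * phi x,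
      phi (pv w) = 1 &
      forall p q, gp p -> gp q -> pend r p = w -> pend r q = w ->
        phi (pmon_star pv pe' p * pmon pv pe q) = (p == q)%:R].
Proof.
pose t0 : TT s r := (canon s r w, 0%R).
case: hA => _ [hex _].
have [P [hP [hv he]]] := hex _ _ _ _ (Rep_LF R t0).
pose g0 (t : TT s r) : R := if t.2 == 0 then 1 else 0.
exists (fun y => lapp (P y) g0 t0); split.
- by move=> x y; rewrite (homD hP).
- by move=> k x; rewrite (homZ hP).
- by rewrite hv /= /Ovf /= eqxx.
move=> p q Hp Hq Ep Eq.
have Fv : (fun v => P (pv v)) = Ov R t0 by apply: funext => v; rewrite hv.
have Fe : (fun e => P (pe e)) = Oe R t0 by apply: funext => e; case: (he e).
have Fe' : (fun e => P (pe' e)) = Oe' R t0 by apply: funext => e; case: (he e) => _ ->.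
rewrite (homM hP) lappM (hom_pstar hP) (hom_pmon hP) Fv Fe Fe'.
rewrite (star_sem t0 _ _ _ Hp) Ep /= eqxx add0r.
have [Sz|Sz] := eqVneq (size q.2) (size p.2).
  rewrite (mon_sem t0 g0 _ Hq Hp) //= ?Ep // /g0 /= subrr eqxx eq_sym.
  by case: (p == q).
have [->|[y ->]] := mon_weak t0 g0 (xconsL p.2 (canon s r w)) (size p.2)%:Z Hq.
  by case: eqP => // E; rewrite E eqxx in Sz.
rewrite /g0 /= subr_eq0 eqz_nat eq_sym (negbTE Sz).
by case: eqP => // E; rewrite E eqxx in Sz.
Qed.
End Phi.

Section Key.
Variables (C : numClosedFieldType) (R : comNzRingType) (iota : {rmorphism R -> C})
  (iota_inj : injective iota) (conjR : R -> R)
  (conjR_spec : forall k : R, iota (conjR k) = (iota k)^*)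
  (hR : EUPU iota)
  (V Ed : finType) (s r : Ed -> V)
  (A : algType R) (pv : V -> A) (pe pe' : Ed -> A) (star : A -> A)
  (hA : IsLeavittPathAlgebra s r pv pe pe')
  (hstar : IsLPAInvolution conjR pv pe pe' star).
Local Notation gp := (is_gpath s r).

Lemma conj_norm k : iota (conjR k * k) = `|iota k| ^+ 2.
Proof. by rewrite rmorphM conjR_spec normCK mulrC. Qed.

Lemma key (w : V) (n : nat) (sg : 'I_n -> V * seq Ed) (d : 'I_n -> R) :
  (forall j, gp (sg j) /\ pend r (sg j) = w) ->
  star (\sum_j d j *: pmon pv pe (sg j)) * (\sum_j d j *: pmon pv pe (sg j)) = pv w ->
  exists rho lam, [/\ gp rho, pend r rho = w,
    \sum_j d j *: pmon pv pe (sg j) = lam *: pmon pv pe rho & `|iota lam| = 1].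
Proof.
move=> Hsg; set x := \sum_j _ => Hx.
pose U := undup [seq sg j | j <- enum 'I_n].
pose m := size U.
pose tau (i : 'I_m) := nth (w, [::]) U i.
have tauU i : tau i \in U by apply: mem_nth.
have tauP i : exists j, tau i = sg j.
  have := tauU i; rewrite mem_undup => /mapP[j _ ->]; by exists j.
have tau_inj : injective tau.
  move=> i i' E; apply: val_inj => /=; apply/eqP.
  have := nth_uniq (w, [::]) (ltn_ord i) (ltn_ord i') (undup_uniq [seq sg j | j <- enum 'I_n]).
  by rewrite -/U -/(tau i) -/(tau i') E eqxx => <-.
have idxP j : (index (sg j) U < m)%N.
  by rewrite index_mem mem_undup map_f ?mem_enum.
pose idx j : 'I_m := Ordinal (idxP j).
have tau_idx j : tau (idx j) = sg j.
  by rewrite /tau /= nth_index // mem_undup map_f ?mem_enum.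
have tauG i : gp (tau i) /\ pend r (tau i) = w by have [j ->] := tauP i; exact: Hsg.
pose D i := \sum_(j | sg j == tau i) d j.
have xE : x = \sum_(i < m) D i *: pmon pv pe (tau i).
  rewrite /x; under [RHS]eq_bigr => i _ do rewrite scaler_suml.
  rewrite (exchange_big_dep predT) //=; apply: eq_bigr => j _.
  rewrite (big_pred1 (idx j)) ?(eqP (idx j == idx j)) //.
    by rewrite tau_idx.
  move=> i /=; apply/eqP/eqP => [E|->]; last by rewrite tau_idx.
  by apply: tau_inj; rewrite tau_idx E.
have [phi [phiD phiZ phiv phiP]] := phi_exists hA w.
have phi0 : phi 0 = 0 by rewrite -(scale0r 0) phiZ mul0r.
have phiS (I : Type) (rr : seq I) (P : pred I) (F : I -> A) :
    phi (\sum_(i <- rr | P i) F i) = \sum_(i <- rr | P i) phi (F i).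
  by elim/big_rec2: _ => // i y1 y2 _ <-; rewrite phiD.
have hsum : \sum_(i < m) conjR (D i) * D i = 1.
  rewrite -phiv -Hx xE (starS hstar) mulr_suml phiS; apply: eq_bigr => i _.
  rewrite (starZ hstar) (star_pmon hstar) [in RHS]mulr_sumr [in RHS]phiS.
  rewrite [in RHS](bigD1 i) //= [in RHS]big1 ?addr0.
    rewrite -scalerAl -scalerAr scalerA phiZ.
    by case: (tauG i) => G1 G2; rewrite phiP // eqxx mulr1.
  move=> i' ne; rewrite -scalerAl -scalerAr scalerA phiZ.
  case: (tauG i) => G1 G2; case: (tauG i') => G1' G2'; rewrite phiP //.
  case: eqP => [E|_]; last by rewrite mulr0.
  by have := tau_inj _ _ E => E'; rewrite E' eqxx in ne.
have hsumC : \sum_(i < m) `|iota (D i)| ^+ 2 = 1.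
  by rewrite -(rmorph1 iota) -hsum rmorph_sum; apply: eq_bigr => i _; rewrite conj_norm.
have [i0 Hi0] := hR hsumC.
exists (tau i0), (D i0); case: (tauG i0) => G1 G2; split=> //.
  rewrite xE (bigD1 i0) //= big1 ?addr0 // => i ne; by rewrite Hi0 // scale0r.
move: hsumC; rewrite (bigD1 i0) //= big1 ?addr0; last first.
  by move=> i ne; rewrite Hi0 // rmorph0 normr0 expr0n.
by move/eqP; rewrite sqrp_eq1 ?normr_ge0 // => /eqP.
Qed.
End Key.

Lemma split_l m n (j : 'I_m) : split (lshift n j) = inl j.
Proof. exact: (unsplitK (inl j : 'I_m + 'I_n)). Qed.
Lemma split_r m n (j : 'I_n) : split (rshift m j) = inr j.
Proof. exact: (unsplitK (inr j : 'I_m + 'I_n)). Qed.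

Section Comb.
Variables (R : comNzRingType) (A : algType R) (G : A -> Prop).
Definition Comb (x : A) := exists n (c : 'I_n -> A) (l : 'I_n -> R),
  (forall i, G (c i)) /\ x = \sum_(i < n) l i *: c i.
Lemma Comb0 : Comb 0.
Proof. by exists 0%N, (fun _ => 0), (fun _ => 0); split; [case=> m; rewrite ltn0 | rewrite big_ord0]. Qed.
Lemma CombG x : G x -> Comb x.
Proof. by move=> Gx; exists 1%N, (fun _ => x), (fun _ => 1); split=> //; rewrite big_ord1 scale1r. Qed.
Lemma CombD x y : Comb x -> Comb y -> Comb (x + y).
Proof.
move=> [n1 [c1 [l1 [G1 ->]]]] [n2 [c2 [l2 [G2 ->]]]].
exists (n1 + n2)%N, (fun i => match split i with inl j => c1 j | inr j => c2 j end),
  (fun i => match split i with inl j => l1 j | inr j => l2 j end); split.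
  by move=> i; case: split.
by rewrite big_split_ord /=; congr (_ + _); apply: eq_bigr => j _; rewrite ?split_l ?split_r.
Qed.
Lemma CombZ k x : Comb x -> Comb (k *: x).
Proof.
move=> [n [c [l [Gc ->]]]]; exists n, c, (fun i => k * l i); split=> //.
by rewrite scaler_sumr; apply: eq_bigr => i _; rewrite scalerA.
Qed.
Lemma CombS (I : Type) (rr : seq I) (P : pred I) (F : I -> A) :
  (forall i, P i -> Comb (F i)) -> Comb (\sum_(i <- rr | P i) F i).
Proof.
move=> H; elim: rr => [|i rr IH]; first by rewrite big_nil; exact: Comb0.
rewrite big_cons; case: ifP => // Pi; exact: CombD (H _ Pi) IH.
Qed.
Lemma Comb_sub : submodP Comb.
Proof. split; [exact: Comb0 | exact: CombD | exact: CombZ]. Qed.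
End Comb.

Section Span.
Variables (R : comNzRingType) (V Ed : finType) (s r : Ed -> V)
  (A : algType R) (pv : V -> A) (pe pe' : Ed -> A)
  (hA : IsLeavittPathAlgebra s r pv pe pe').
Local Notation gp := (is_gpath s r).
Let hL : LeavittFamily s r pv pe pe' := hA.1.

Definition Mon (y : A) := exists a b, [/\ gp a, gp b & y = pmon pv pe a * pmon_star pv pe' b].
Local Notation Span := (Comb Mon).

Lemma span_mon a b : gp a -> gp b -> Span (pmon pv pe a * pmon_star pv pe' b).
Proof. by move=> Ha Hb; apply: CombG; exists a, b. Qed.

Lemma lift_gen g : (forall a b, gp a -> gp b -> Span (g * (pmon pv pe a * pmon_star pv pe' b))) ->
  forall x, Span x -> Span (g * x).
Proof.
move=> H x [n [c [l [Gc ->]]]]; rewrite mulr_sumr; apply: CombS => i _.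
rewrite -scalerAr; apply: CombZ; have [a [b [Ha Hb ->]]] := Gc i; exact: H.
Qed.

Lemma span_v v a b : gp a -> gp b -> Span (pv v * (pmon pv pe a * pmon_star pv pe' b)).
Proof.
move=> Ha Hb; rewrite mulrA -[pv v]/(pmon_star pv pe' (v, [::])).
have [E|[rho [Hr _ E]]] := claim hL (gp_nil s r v) Ha (or_introl (leq0n _)).
  by rewrite E mul0r; exact: Comb0.
by rewrite E; exact: span_mon.
Qed.

Lemma span_e e a b : gp a -> gp b -> Span (pe e * (pmon pv pe a * pmon_star pv pe' b)).
Proof.
move=> Ha Hb; have pe1 : pmon pv pe (s e, [:: e]) = pe e by rewrite /pmon /= big_seq1.
have g1 : gp (s e, [:: e]) by rewrite /is_gpath /= eqxx.
rewrite mulrA -pe1.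
have [E|[rho [Hr _ E]]] := concat hL g1 Ha.
  by rewrite E mul0r; exact: Comb0.
by rewrite E; exact: span_mon.
Qed.

Lemma span_e' e a b : gp a -> gp b -> Span (pe' e * (pmon pv pe a * pmon_star pv pe' b)).
Proof.
move=> Ha Hb; have pe1 : pmon_star pv pe' (s e, [:: e]) = pe' e by rewrite /pmon_star /= big_seq1.
have g1 : gp (s e, [:: e]) by rewrite /is_gpath /= eqxx.
case: a Ha => w [|f fs] Ha; last first.
  rewrite mulrA -pe1.
  have [E|[rho [Hr _ E]]] := claim hL g1 Ha (or_introl (ltn0Sn _)).
    by rewrite E mul0r; exact: Comb0.
  by rewrite E; exact: span_mon.
rewrite /pmon /=; have [E|ne] := eqVneq w (s e); last first.
  by rewrite mulrA (pe'_pv_0 hL ne) mul0r; exact: Comb0.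
subst w; rewrite mulrA (LF_es' hL).
have [Eb|neb] := eqVneq (s e) (pend r b); last first.
  rewrite -(pstar_l hL Hb) mulrA (pe'_pv_0 hL) 1?eq_sym // mul0r; exact: Comb0.
rewrite -(pstar_rcons hL Hb Eb) -(pstar_l hL (gp_rcons Hb Eb)) pend_rcons.
by rewrite -[pv (r e)]/(pmon pv pe (r e, [::])); apply: span_mon => //; exact: gp_rcons.
Qed.

Lemma span_all x : Span x.
Proof.
case: hA => _ [hex huniq].
pose L := lms R A Span (Comb_sub Mon).
pose Lv v : L := LMS (pv v) (lift_gen (span_v v)).
pose Le e : L := LMS (pe e) (lift_gen (span_e e)).
pose Le' e : L := LMS (pe' e) (lift_gen (span_e' e)).
have lmvM (a b : L) : lmv (a * b) = lmv a * lmv b by [].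
have lmvS (I : Type) (rr : seq I) (P : pred I) (F : I -> L) :
    lmv (\sum_(i <- rr | P i) F i) = \sum_(i <- rr | P i) lmv (F i).
  by elim/big_rec2: _ => // i y1 y2 _ <-.
have hLL : LeavittFamily s r Lv Le Le'.
  case: hL => h1 [h2 [h3 [h4 [h5 [h6 [h7 h8]]]]]].
  split; [|split; [|split; [|split; [|split; [|split; [|split]]]]]].
  - by move=> v; apply: lms_ext; rewrite lmvM /= h1.
  - by move=> v w ne; apply: lms_ext; rewrite lmvM /= h2.
  - by move=> e f ne; apply: lms_ext; rewrite lmvM /= h3.
  - by move=> e; apply: lms_ext; rewrite lmvM /= h4.
  - by move=> e; split; apply: lms_ext; rewrite lmvM /=; case: (h5 e).
  - by move=> e; split; apply: lms_ext; rewrite lmvM /=; case: (h6 e).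
  - by move=> v Hv; apply: lms_ext; rewrite lmvS /= (h7 v Hv).
  - by apply: lms_ext; rewrite lmvS /= h8.
have [f [hf [fv fe]]] := hex _ _ _ _ hLL.
have hg : is_alg_hom (fun x => lmv (f x)).
  split; [|split; [|split]].
  - by move=> a b; rewrite (homD hf).
  - by move=> a b; rewrite (homM hf).
  - by rewrite (hom1 hf).
  - by move=> k a; rewrite (homZ hf).
have hid : is_alg_hom (fun x : A => x) by [].
have E := huniq A _ _ hg hid.
have Ex : lmv (f x) = x.
  apply: E => [v|e]; first by rewrite fv.
  by case: (fe e) => -> ->.
have S1 : Span 1.
  case: hL => h1 [_ [_ [_ [_ [_ [_ h8]]]]]].
  rewrite -h8; apply: CombS => v _; rewrite -h1.
  exact: (span_mon (gp_nil s r v) (gp_nil s r v)).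
by have := lmP (f x) S1; rewrite Ex mulr1.
Qed.
End Span.

Section Part.
Variables (V Ed : finType) (s r : Ed -> V) (B : pzRingType) (pv : V -> B) (pe pe' : Ed -> B)
  (hL : LeavittFamily s r pv pe pe').
Local Notation gp := (is_gpath s r).

Definition pstep (g : V * seq Ed) : seq (V * seq Ed) :=
  if [exists e, s e == pend r g] then
    [seq (g.1, rcons g.2 e) | e <- [seq e <- index_enum Ed | s e == pend r g]]
  else [:: g].

Lemma partition k : exists PN : seq (V * seq Ed),
  [/\ forall g, g \in PN -> gp g,
      \sum_(g <- PN) pmon pv pe g * pmon_star pv pe' g = 1 &
      forall g, g \in PN -> (k <= size g.2)%N \/ sinkv s (pend r g)].
Proof.
case: hL => h1 [_ [_ [_ [_ [_ [h7 h8]]]]]].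
elim: k => [|k [PN [Pgp Psum Plen]]].
  exists [seq (v, [::]) | v <- index_enum V]; split.
  - by move=> g /mapP[v _ ->]; exact: gp_nil.
  - by rewrite big_map -h8; apply: eq_bigr => v _; rewrite /= h1.
  - by move=> g _; left.
exists (flatten [seq pstep g | g <- PN]); split.
- move=> g' /flattenP[l /mapP[g Hg ->]]; rewrite /pstep; case: ifP => _; last first.
    by rewrite inE => /eqP ->; exact: Pgp.
  move=> /mapP[e]; rewrite mem_filter => /andP[/eqP se _] ->.
  exact: gp_rcons (Pgp _ Hg) se.
- rewrite big_flatten big_map -Psum; apply: eq_big_seq => g Hg.
  rewrite /pstep; case: ifP => [/existsP[e0 /eqP He0]|_]; last by rewrite big_seq1.
  rewrite big_map big_filter.
  under eq_bigr => e /eqP se do rewrite (pmon_rcons hL (Pgp _ Hg) se) (pstar_rcons hL (Pgp _ Hg) se) mulrA -(mulrA _ (pe e)).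
  rewrite -mulr_suml -mulr_sumr -h7; last by exists e0.
  by rewrite (pmon_r hL (Pgp _ Hg)).
- move=> g' /flattenP[l /mapP[g Hg ->]]; rewrite /pstep; case: ifP => [/existsP[e0 /eqP He0]|ns].
    move=> /mapP[e]; rewrite mem_filter => /andP[/eqP se _] ->; left => /=.
    rewrite size_rcons ltnS; case: (Plen _ Hg) => // Hs; by case: (Hs e0).
  rewrite inE => /eqP ->; right => e E; move/negbT: ns => /existsP; apply; exists e.
  by rewrite E.
Qed.
End Part.

Theorem proposition4p4
  (C : numClosedFieldType) (R : comNzRingType) (iota : {rmorphism R -> C})
  (iota_inj : injective iota) (conjR : R -> R)
  (conjR_spec : forall k : R, iota (conjR k) = (iota k)^*)
  (hR : EUPU iota)
  (V Ed : finType) (s r : Ed -> V)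
  (A : algType R) (pv : V -> A) (pe pe' : Ed -> A) (star : A -> A)
  (hA : IsLeavittPathAlgebra s r pv pe pe')
  (hstar : IsLPAInvolution conjR pv pe pe' star)
  (u : A) (hu : u * star u = 1 /\ star u * u = 1) :
  exists (n : nat) (a b : 'I_n -> V * seq Ed) (l : 'I_n -> R),
    (forall i, is_gpath s r (a i) /\ is_gpath s r (b i)) /\
    u = \sum_(i < n) l i *: (pmon pv pe (a i) * pmon_star pv pe' (b i)) /\
    \sum_(i < n) pmon pv pe (a i) * pmon_star pv pe' (a i) = 1 /\
    \sum_(i < n) pmon pv pe (b i) * pmon_star pv pe' (b i) = 1 /\
    (forall i, `|iota (l i)| = 1).
Proof.
have hL : LeavittFamily s r pv pe pe' := hA.1.
case: hu => hu1 hu2.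
have [n0 [c0 [l0 [Gc0 uE]]]] := span_all hA u.
have Hab i : exists ab : (V * seq Ed) * (V * seq Ed),
    [/\ is_gpath s r ab.1, is_gpath s r ab.2 & c0 i = pmon pv pe ab.1 * pmon_star pv pe' ab.2].
  by have [a [b [Ha Hb E]]] := Gc0 i; exists (a, b).
have [ab Hab'] := choice Hab.
pose N := (\max_(i < n0) size (ab i).2.2)%N.
have [PN [PNgp PNsum PNlen]] := partition hL N.
have PC g : g \in PN -> Comb (fun y => exists sg, [/\ is_gpath s r sg, pend r sg = pend r g & y = pmon pv pe sg]) (u * pmon pv pe g).
  move=> Hg; rewrite uE mulr_suml; apply: CombS => i _; rewrite -scalerAl; apply: CombZ.
  have [Ga Gb ->] := Hab' i; rewrite -mulrA.
  have cond : (size (ab i).2.2 <= size g.2)%N \/ sinkv s (pend r g).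
    case: (PNlen _ Hg) => H; [left | by right].
    by apply: leq_trans H; rewrite /N; exact: (leq_bigmax i).
  have [E|[rho [Hr Er E]]] := claim hL Gb (PNgp _ Hg) cond.
    by rewrite E mulr0; exact: Comb0.
  rewrite E; have [E2|[rho' [Hr' Er' E2]]] := concat hL Ga Hr.
    by rewrite E2; exact: Comb0.
  by rewrite E2; apply: CombG; exists rho'; split=> //; rewrite Er' Er.
have K g : g \in PN -> exists sl : (V * seq Ed) * R,
    [/\ is_gpath s r sl.1, u * pmon pv pe g = sl.2 *: pmon pv pe sl.1 & `|iota sl.2| = 1].
  move=> Hg; have [m [c [d [Gc cE]]]] := PC g Hg.
  have [sg Hsg] := choice Gc.
  have cE' : u * pmon pv pe g = \sum_(i < m) d i *: pmon pv pe (sg i).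
    by rewrite cE; apply: eq_bigr => i _; case: (Hsg i) => _ _ <-.
  have Hs j : is_gpath s r (sg j) /\ pend r (sg j) = pend r g by case: (Hsg j).
  have Hx : star (\sum_(i < m) d i *: pmon pv pe (sg i)) * (\sum_(i < m) d i *: pmon pv pe (sg i))
      = pv (pend r g).
    rewrite -cE' (starM hstar) (star_pmon hstar) mulrA -(mulrA (pmon_star pv pe' g)) hu2 mulr1.
    exact: (pstar_mon hL (PNgp _ Hg)).
  have [rho [lam [Hr _ E Hl]]] := key conjR_spec hR hA hstar Hs Hx.
  by exists (rho, lam); split=> //; rewrite cE' E.
pose m := size PN.
pose gam (i : 'I_m) := tnth (in_tuple PN) i.
have gamP i : gam i \in PN by exact: mem_tnth.
have [sl Hsl] := choice (fun i => K (gam i) (gamP i)).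
exists m, (fun i => (sl i).1), gam, (fun i => (sl i).2); split; [|split; [|split; [|split]]].
- by move=> i; case: (Hsl i) => ? _ _; split=> //; exact: PNgp.
- rewrite -[u]mulr1 -PNsum big_tnth mulr_sumr; apply: eq_bigr => i _.
  by rewrite -/(gam i) mulrA; case: (Hsl i) => _ -> _; rewrite scalerAl.
- have -> : (1 : A) = u * (\sum_(g <- PN) pmon pv pe g * pmon_star pv pe' g) * star u.
    by rewrite PNsum mulr1.
  rewrite [in RHS]big_tnth [in RHS]mulr_sumr [in RHS]mulr_suml; apply: eq_bigr => i _.
  rewrite -/(gam i); case: (Hsl i) => _ E Hl.
  have lc : (sl i).2 * conjR (sl i).2 = 1.
    apply: iota_inj; rewrite rmorph1 rmorphM conjR_spec -normCK Hl expr1n //.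
  have -> : u * (pmon pv pe (gam i) * pmon_star pv pe' (gam i)) * star u =
      (u * pmon pv pe (gam i)) * star (u * pmon pv pe (gam i)).
    by rewrite (starM hstar) (star_pmon hstar) !mulrA.
  rewrite E (starZ hstar) (star_pmon hstar).
  by rewrite -scalerAl -scalerAr scalerA lc scale1r.
- by rewrite -PNsum [in RHS]big_tnth.
- by move=> i; case: (Hsl i).
Qed.
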